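(* The pair $(\ell_2^2, C[0,1])$ fails the uniform sBPBp.
   Context: Scalars $\mathbb{K}=\mathbb{R}$ or $\mathbb{C}$; $\ell_2^2$ is $\mathbb{K}^2$ with the Euclidean norm; $C[0,1]$ is the space of continuous $\mathbb{K}$-valued functions on $[0,1]$ with the sup norm; $S_X$ is the unit sphere of $X$ and $\mathcal{L}(X,Y)$ the bounded linear operators. A pair of Banach spaces $(X,Y)$ has the uniform strong Bishop–Phelps–Bollobás property (uniform sBPBp) if for every $\varepsilon>0$ there exists $\eta(\varepsilon)>0$ such that whenever $T\in\mathcal{L}(X,Y)$ with $\|T\|=1$ and $x_0\in S_X$ satisfy $\|T(x_0)\|>1-\eta(\varepsilon)$, there exists $x_1\in S_X$ with $\|T(x_1)\|=1$ and $\|x_1-x_0\|<\varepsilon$. *)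

(* Defs.v *)
From Stdlib Require Import Reals Lra ClassicalEpsilon.
Open Scope R_scope.

(* Supremum of a set of reals (meaningful when the lub exists; otherwise an
   unspecified real). *)
Definition Rsup (A : R -> Prop) : R :=
  epsilon (inhabits 0) (fun s => is_lub A s).

Record Cplx : Type := mkC { Re : R; Im : R }.
Definition Cabs (z : Cplx) : R := sqrt (Re z ^ 2 + Im z ^ 2).
Definition Cadd (z w : Cplx) : Cplx := mkC (Re z + Re w) (Im z + Im w).
Definition Cmul (z w : Cplx) : Cplx :=
  mkC (Re z * Re w - Im z * Im w) (Re z * Im w + Im z * Re w).
Definition Copp (z : Cplx) : Cplx := mkC (- Re z) (- Im z).

Section Generic.
Variables (K : Type) (kabs : K -> R) (kadd kmul : K -> K -> K) (kopp : K -> K).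

Definition vec : Type := (K * K)%type.
Definition l2norm (x : vec) : R := sqrt (kabs (fst x) ^ 2 + kabs (snd x) ^ 2).
Definition vadd (x y : vec) : vec := (kadd (fst x) (fst y), kadd (snd x) (snd y)).
Definition vscal (a : K) (x : vec) : vec := (kmul a (fst x), kmul a (snd x)).
Definition vsub (x y : vec) : vec := vadd x (kopp (fst y), kopp (snd y)).

(* C[0,1]: K-valued functions continuous on [0,1] (values off [0,1] are
   irrelevant to the norm), with the sup norm over [0,1]. *)
Definition cont_on01 (f : R -> K) : Prop :=
  forall t, 0 <= t <= 1 -> forall e, 0 < e -> exists d, 0 < d /\
    forall s, 0 <= s <= 1 -> Rabs (s - t) < d -> kabs (kadd (f s) (kopp (f t))) < e.
Definition supnorm (f : R -> K) : R :=
  Rsup (fun y => exists t, 0 <= t <= 1 /\ y = kabs (f t)).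

Definition is_bdd_op (T : vec -> R -> K) : Prop :=
  (forall x, cont_on01 (T x)) /\
  (forall (a : K) (x y : vec),
      T (vadd (vscal a x) y) = (fun t => kadd (kmul a (T x t)) (T y t))) /\
  (exists M, forall x, supnorm (T x) <= M * l2norm x).

Definition opnorm (T : vec -> R -> K) : R :=
  Rsup (fun y => exists x, l2norm x <= 1 /\ y = supnorm (T x)).

Definition uniform_sBPBp : Prop :=
  forall eps, 0 < eps -> exists eta, 0 < eta /\
    forall (T : vec -> R -> K) (x0 : vec),
      is_bdd_op T -> opnorm T = 1 -> l2norm x0 = 1 ->
      supnorm (T x0) > 1 - eta ->
      exists x1, l2norm x1 = 1 /\ supnorm (T x1) = 1 /\
                 l2norm (vsub x1 x0) < eps.
End Generic.

Definition uniform_sBPBp_real : Prop := uniform_sBPBp R Rabs Rplus Rmult Ropp.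
Definition uniform_sBPBp_complex : Prop := uniform_sBPBp Cplx Cabs Cadd Cmul Copp.

(* Main.v *)
Require Import Defs.
From Stdlib Require Import Reals Lra ClassicalEpsilon FunctionalExtensionality.
Open Scope R_scope.

Lemma Rsup_eq (A : R -> Prop) s : is_lub A s -> Rsup A = s.
Proof.
  intros H. unfold Rsup.
  pose proof (epsilon_spec (inhabits 0) (fun s => is_lub A s) (ex_intro _ s H)) as H2.
  simpl in H2. set (m := epsilon _ _) in *.
  destruct H as [H1 H1'], H2 as [H3 H3'].
  apply Rle_antisym; auto.
Qed.

Lemma supnorm_max K (kabs : K -> R) (h : R -> K) :
  (forall t, 0 <= t <= 1 -> kabs (h t) <= Rmax (kabs (h 0)) (kabs (h 1))) ->
  supnorm K kabs h = Rmax (kabs (h 0)) (kabs (h 1)).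
Proof.
  intros H. unfold supnorm. apply Rsup_eq. split.
  - intros y [t [Ht ->]]. auto.
  - intros b Hb. apply Rmax_lub; apply Hb.
    + exists 0. split; [lra|reflexivity].
    + exists 1. split; [lra|reflexivity].
Qed.

Lemma kabs_le_l2 (a b : R) : 0 <= a -> a <= sqrt (a ^ 2 + b ^ 2).
Proof.
  intros Ha. rewrite <- (sqrt_pow2 a Ha) at 1. apply sqrt_le_1_alt.
  pose proof (pow2_ge_0 b). lra.
Qed.

Lemma not_usbpbp K kabs kadd kmul kopp (z o : K) (T : R -> vec K -> R -> K) :
  (forall a, 0 <= kabs a) ->
  kabs z = 0 -> kabs o = 1 -> (forall a, kabs (kadd a (kopp z)) = kabs a) ->
  (forall c, 1/2 <= c < 1 -> is_bdd_op K kabs kadd kmul kopp (T c)) ->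
  (forall c x, 1/2 <= c < 1 ->
      supnorm K kabs (T c x) = Rmax (kabs (fst x)) (c * kabs (snd x))) ->
  ~ uniform_sBPBp K kabs kadd kmul kopp.
Proof.
  intros Hpos Hz Ho Hsub Hbdd Hsup H.
  destruct (H 1 Rlt_0_1) as [eta [Heta HT]].
  set (c := 1 - Rmin eta 1 / 2).
  assert (Hc : 1/2 <= c < 1).
  { unfold c. pose proof (Rmin_r eta 1). pose proof (Rmin_glb_lt eta 1 0 Heta Rlt_0_1). lra. }
  assert (Hce : c > 1 - eta).
  { unfold c. pose proof (Rmin_l eta 1). pose proof (Rmin_glb_lt eta 1 0 Heta Rlt_0_1). lra. }
  destruct (HT (T c) (z, o)) as [x1 [Hn1 [Hs1 Hd]]].
  - apply Hbdd; exact Hc.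
  - unfold opnorm. apply Rsup_eq. split.
    + intros y [x [Hx ->]]. rewrite Hsup by exact Hc.
      unfold l2norm in Hx. destruct x as [a b]; cbn [fst snd] in *.
      pose proof (Hpos a). pose proof (Hpos b).
      pose proof (kabs_le_l2 (kabs a) (kabs b) (Hpos a)).
      pose proof (kabs_le_l2 (kabs b) (kabs a) (Hpos b)).
      rewrite Rplus_comm in H3.
      apply Rmax_lub; [lra|]. assert (kabs b <= 1) by lra. nra.
    + intros b Hb. apply Hb. exists (o, z). split.
      * unfold l2norm; cbn [fst snd]. rewrite Ho, Hz.
        replace (1 ^ 2 + 0 ^ 2) with 1 by ring. rewrite sqrt_1. lra.
      * rewrite Hsup by exact Hc. cbn [fst snd]. rewrite Ho, Hz.
        rewrite Rmax_left; lra.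
  - unfold l2norm; cbn [fst snd]. rewrite Ho, Hz.
    replace (0 ^ 2 + 1 ^ 2) with 1 by ring. apply sqrt_1.
  - rewrite Hsup by exact Hc. cbn [fst snd]. rewrite Ho, Hz.
    rewrite Rmax_right; lra.
  - rewrite Hsup in Hs1 by exact Hc.
    destruct x1 as [a b]. unfold l2norm in Hn1; cbn [fst snd] in *.
    pose proof (Hpos a). pose proof (Hpos b).
    pose proof (kabs_le_l2 (kabs b) (kabs a) (Hpos b)).
    rewrite Rplus_comm in H2.
    assert (Ha : kabs a = 1).
    { revert Hs1. unfold Rmax. destruct (Rle_dec (kabs a) (c * kabs b)); nra. }
    unfold vsub, vadd, l2norm in Hd; cbn [fst snd] in Hd. rewrite Hsub, Ha in Hd.
    assert (1 <= sqrt (1 ^ 2 + kabs (kadd b (kopp o)) ^ 2)).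
    { rewrite <- sqrt_1 at 1. apply sqrt_le_1_alt.
      pose proof (pow2_ge_0 (kabs (kadd b (kopp o)))). lra. }
    lra.
Qed.

Definition TR (c : R) (x : vec R) : R -> R := fun t => fst x * t + snd x * (c * (1 - t)).

Lemma TR_sup c x : 1/2 <= c < 1 -> supnorm R Rabs (TR c x) = Rmax (Rabs (fst x)) (c * Rabs (snd x)).
Proof.
  intros Hc. rewrite supnorm_max.
  - unfold TR. replace (fst x * 0 + snd x * (c * (1 - 0))) with (c * snd x) by ring.
    replace (fst x * 1 + snd x * (c * (1 - 1))) with (fst x) by ring.
    rewrite Rabs_mult, (Rabs_pos_eq c) by lra. apply Rmax_comm.
  - intros t Ht. unfold TR.
    set (A := snd x * (c * (1 - 0))). set (B := fst x * 1 + snd x * (c * (1 - 1))).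
    replace (fst x * t + snd x * (c * (1 - t))) with ((1 - t) * A + t * B) by (unfold A, B; ring).
    pose proof (Rmax_l (Rabs (fst x * 0 + A)) (Rabs B)).
    pose proof (Rmax_r (Rabs (fst x * 0 + A)) (Rabs B)).
    replace (fst x * 0 + A) with A in * by ring.
    set (m := Rmax (Rabs A) (Rabs B)) in *.
    apply Rabs_le.
    pose proof (Rle_abs A). pose proof (Rle_abs (-A)). pose proof (Rle_abs B). pose proof (Rle_abs (-B)).
    rewrite Rabs_Ropp in *. nra.
Qed.

Lemma TR_bdd c : 1/2 <= c < 1 -> is_bdd_op R Rabs Rplus Rmult Ropp (TR c).
Proof.
  intros Hc. split; [|split].
  - intros x t Ht e He. set (B := fst x - snd x * c).
    exists (e / (Rabs B + 1)). split.
    + apply Rdiv_lt_0_compat; [lra|]. pose proof (Rabs_pos B); lra.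
    + intros s Hs Hst. unfold TR.
      replace (fst x * s + snd x * (c * (1 - s)) + - (fst x * t + snd x * (c * (1 - t))))
        with (B * (s - t)) by (unfold B; ring).
      rewrite Rabs_mult. pose proof (Rabs_pos B). pose proof (Rabs_pos (s - t)).
      apply (Rmult_lt_compat_r (Rabs B + 1)) in Hst; [|lra].
      unfold Rdiv in Hst. rewrite Rmult_assoc, Rinv_l in Hst by lra. nra.
  - intros a x y. unfold TR. apply functional_extensionality. intros t.
    cbn [fst snd vadd vscal]. ring.
  - exists 1. intros x. rewrite TR_sup by exact Hc. unfold l2norm.
    pose proof (kabs_le_l2 (Rabs (fst x)) (Rabs (snd x)) (Rabs_pos _)).
    pose proof (kabs_le_l2 (Rabs (snd x)) (Rabs (fst x)) (Rabs_pos _)).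
    rewrite Rplus_comm in H0. pose proof (Rabs_pos (snd x)).
    apply Rmax_lub; nra.
Qed.

Lemma real_part : ~ uniform_sBPBp_real.
Proof.
  apply (not_usbpbp R Rabs Rplus Rmult Ropp 0 1 TR).
  - apply Rabs_pos.
  - apply Rabs_R0.
  - apply Rabs_R1.
  - intros a. f_equal. ring.
  - exact TR_bdd.
  - exact TR_sup.
Qed.

Definition TC (c : R) (x : vec Cplx) : R -> Cplx := fun t =>
  mkC (Re (fst x) * t + Re (snd x) * (c * (1 - t)))
      (Im (fst x) * t + Im (snd x) * (c * (1 - t))).

Lemma sqrt_Rmax a b : sqrt (Rmax a b) = Rmax (sqrt a) (sqrt b).
Proof.
  unfold Rmax. destruct (Rle_dec a b), (Rle_dec (sqrt a) (sqrt b)); auto.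
  - exfalso; apply n; apply sqrt_le_1_alt; auto.
  - apply Rle_antisym; [lra | apply sqrt_le_1_alt; lra].
Qed.

Lemma Cabs_conv A1 A2 B1 B2 t : 0 <= t <= 1 ->
  sqrt (((1-t)*A1+t*B1)^2+((1-t)*A2+t*B2)^2) <= Rmax (sqrt (A1^2+A2^2)) (sqrt (B1^2+B2^2)).
Proof.
  intros Ht. rewrite <- sqrt_Rmax. apply sqrt_le_1_alt.
  pose proof (Rmax_l (A1^2+A2^2) (B1^2+B2^2)).
  pose proof (Rmax_r (A1^2+A2^2) (B1^2+B2^2)).
  set (m := Rmax _ _) in *.
  assert (2*A1*B1 <= A1^2+B1^2) by (pose proof (pow2_ge_0 (A1 - B1)); nra).
  assert (2*A2*B2 <= A2^2+B2^2) by (pose proof (pow2_ge_0 (A2 - B2)); nra).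
  assert (((1-t)*A1+t*B1)^2+((1-t)*A2+t*B2)^2 <= (1-t)*(A1^2+A2^2) + t*(B1^2+B2^2)).
  { assert (Ht2 : 0 <= t*(1-t)) by nra.
    assert (t*(1-t)*(2*A1*B1) <= t*(1-t)*(A1^2+B1^2)) by (apply Rmult_le_compat_l; lra).
    assert (t*(1-t)*(2*A2*B2) <= t*(1-t)*(A2^2+B2^2)) by (apply Rmult_le_compat_l; lra).
    nra. }
  nra.
Qed.

Lemma Cabs_scale c a b : 0 <= c -> Cabs (mkC (c*a) (c*b)) = c * Cabs (mkC a b).
Proof.
  intros Hc. unfold Cabs; cbn [Re Im].
  replace ((c*a)^2 + (c*b)^2) with (c^2 * (a^2+b^2)) by ring.
  rewrite sqrt_mult_alt by (apply pow2_ge_0). rewrite sqrt_pow2 by lra. reflexivity.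
Qed.

Lemma sqrt_le_sum a b : sqrt (a^2 + b^2) <= Rabs a + Rabs b.
Proof.
  rewrite <- (sqrt_pow2 (Rabs a + Rabs b)) by (pose proof (Rabs_pos a); pose proof (Rabs_pos b); lra).
  apply sqrt_le_1_alt. rewrite <- (pow2_abs a), <- (pow2_abs b).
  pose proof (Rabs_pos a); pose proof (Rabs_pos b). nra.
Qed.

Lemma TC_sup c x : 1/2 <= c < 1 -> supnorm Cplx Cabs (TC c x) = Rmax (Cabs (fst x)) (c * Cabs (snd x)).
Proof.
  intros Hc. destruct x as [[p1 q1] [p2 q2]]. cbn [fst snd].
  assert (E0 : TC c (mkC p1 q1, mkC p2 q2) 0 = mkC (c*p2) (c*q2))
    by (unfold TC; cbn [fst snd Re Im]; f_equal; ring).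
  assert (E1 : TC c (mkC p1 q1, mkC p2 q2) 1 = mkC p1 q1)
    by (unfold TC; cbn [fst snd Re Im]; f_equal; ring).
  rewrite supnorm_max.
  - rewrite E0, E1, Cabs_scale by lra. apply Rmax_comm.
  - intros t Ht. rewrite E0, E1. unfold Cabs, TC; cbn [fst snd Re Im].
    replace (p1 * t + p2 * (c * (1 - t))) with ((1-t)*(c*p2) + t*p1) by ring.
    replace (q1 * t + q2 * (c * (1 - t))) with ((1-t)*(c*q2) + t*q1) by ring.
    apply Cabs_conv; exact Ht.
Qed.

Lemma TC_bdd c : 1/2 <= c < 1 -> is_bdd_op Cplx Cabs Cadd Cmul Copp (TC c).
Proof.
  intros Hc. split; [|split].
  - intros x t Ht e He. set (B1 := Re (fst x) - Re (snd x) * c).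
    set (B2 := Im (fst x) - Im (snd x) * c).
    set (B := Rabs B1 + Rabs B2).
    assert (HB : 0 <= B) by (unfold B; pose proof (Rabs_pos B1); pose proof (Rabs_pos B2); lra).
    exists (e / (B + 1)). split.
    + apply Rdiv_lt_0_compat; lra.
    + intros s Hs Hst. unfold TC, Cadd, Copp, Cabs; cbn [Re Im].
      match goal with |- sqrt (?u ^ 2 + ?v ^ 2) < _ =>
        replace u with (B1 * (s - t)) by (unfold B1; ring);
        replace v with (B2 * (s - t)) by (unfold B2; ring) end.
      eapply Rle_lt_trans; [apply sqrt_le_sum|].
      rewrite !Rabs_mult. pose proof (Rabs_pos (s - t)).
      apply (Rmult_lt_compat_r (B + 1)) in Hst; [|lra].
      unfold Rdiv in Hst. rewrite Rmult_assoc, Rinv_l in Hst by lra.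
      unfold B in *. nra.
  - intros a x y. unfold TC. apply functional_extensionality. intros t.
    destruct a as [a1 a2], x as [[x1 x2] [x3 x4]], y as [[y1 y2] [y3 y4]].
    cbn [fst snd vadd vscal Cadd Cmul Re Im]. unfold vadd, vscal, Cadd, Cmul; cbn [fst snd Re Im]. f_equal; ring.
  - exists 1. intros x. rewrite TC_sup by exact Hc. unfold l2norm.
    assert (P : forall z, 0 <= Cabs z) by (intros; apply sqrt_pos).
    pose proof (kabs_le_l2 (Cabs (fst x)) (Cabs (snd x)) (P _)).
    pose proof (kabs_le_l2 (Cabs (snd x)) (Cabs (fst x)) (P _)).
    rewrite Rplus_comm in H0. pose proof (P (snd x)).
    apply Rmax_lub; nra.
Qed.

Lemma complex_part : ~ uniform_sBPBp_complex.
Proof.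
  apply (not_usbpbp Cplx Cabs Cadd Cmul Copp (mkC 0 0) (mkC 1 0) TC).
  - intros; apply sqrt_pos.
  - unfold Cabs; cbn [Re Im]. replace (0^2+0^2) with 0 by ring. apply sqrt_0.
  - unfold Cabs; cbn [Re Im]. replace (1^2+0^2) with 1 by ring. apply sqrt_1.
  - intros [a b]. unfold Cabs, Cadd, Copp; cbn [Re Im]. f_equal. ring.
  - exact TC_bdd.
  - exact TC_sup.
Qed.

Theorem mainTheorem13 : ~ uniform_sBPBp_real /\ ~ uniform_sBPBp_complex.
Proof. split; [exact real_part | exact complex_part]. Qed.
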